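(* For each $g \geq 2$ there exists $A \in \mathrm{Sp}(2g,\mathbb{Z})$ whose leading eigenvalue is bi-Perron but none of whose eigenvalues is simple. Moreover, there are infinitely many such matrices $A$.
   Context: $\mathrm{Sp}(2g,\mathbb{Z}) = \{A \in \mathrm{GL}(2g,\mathbb{Z}) : A^t J A = J\}$, where $J$ is the $2g\times 2g$ matrix with $J_{ij} = \delta_{i(j-1)} - \delta_{(i-1)j}$. The leading eigenvalue of a matrix is its eigenvalue of largest modulus. An algebraic integer $\lambda > 1$ is bi-Perron if all its Galois conjugates lie in the annulus $\{z \in \mathbb{C} : 1/\lambda \le |z| \le \lambda\}$. An eigenvalue is simple if it is a simple root of the characteristic polynomial. *)

(* Defs.v *)
From mathcomp Require Import all_boot all_order all_algebra all_field.
Set Implicit Arguments. Unset Strict Implicit. Unset Printing Implicit Defensive.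
Import Order.TTheory GRing.Theory Num.Theory.
Local Open Scope ring_scope.

Definition Jmat (n : nat) : 'M[int]_n :=
  \matrix_(i < n, j < n) (((i.+1 == j :> nat)%:R : int) - ((i == j.+1 :> nat)%:R : int)).

Definition symplectic (g : nat) (A : 'M[int]_(2 * g)) : Prop :=
  A \in unitmx /\ A^T *m Jmat (2 * g) *m A = Jmat (2 * g).

Definition cpC (n : nat) (A : 'M[int]_n) : {poly algC} :=
  char_poly (map_mx intr A).

Definition eigenvalue_of (n : nat) (A : 'M[int]_n) (z : algC) : Prop :=
  root (cpC A) z.

Definition simple_eigenvalue (n : nat) (A : 'M[int]_n) (z : algC) : Prop :=
  root (cpC A) z /\ mup z (cpC A) = 1%N.

Definition leading_eigenvalue (n : nat) (A : 'M[int]_n) (lam : algC) : Prop :=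
  eigenvalue_of A lam /\
  forall mu, eigenvalue_of A mu -> mu != lam -> `|mu| < `|lam|.

Definition galois_conjugate (x z : algC) : Prop := root (minCpoly x) z.

Definition bi_perron (lam : algC) : Prop :=
  lam \in Aint /\ 1 < lam /\
  forall z, galois_conjugate lam z -> lam^-1 <= `|z| /\ `|z| <= lam.

Definition thm_prop (g : nat) (A : 'M[int]_(2 * g)) : Prop :=
  symplectic A /\
  (exists lam, leading_eigenvalue A lam /\ bi_perron lam) /\
  (forall z, eigenvalue_of A z -> ~ simple_eigenvalue A z).

(* Main.v *)
Require Import Defs.
From mathcomp Require Import all_boot all_order all_algebra all_field.
From mathcomp Require Import ring zify.
Set Implicit Arguments. Unset Strict Implicit. Unset Printing Implicit Defensive.
Import Order.TTheory GRing.Theory Num.Theory.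
Local Open Scope ring_scope.

Definition Kc (a b : nat) : 'M[int]_(a, b) :=
  \matrix_(i < a, j < b) (((i == a.-1 :> nat) && (j == 0 :> nat))%:R : int).

Lemma Jblock a b : (0 < a)%N ->
  Jmat (a + b) = block_mx (Jmat a) (Kc a b) (- (Kc a b)^T) (Jmat b).
Proof.
move=> a0; apply/matrixP => i j.
case: (split_ordP i) => i' ->; case: (split_ordP j) => j' ->;
  rewrite ?block_mxEul ?block_mxEur ?block_mxEdl ?block_mxEdr !mxE /=.
all: try done.
all: have hi := ltn_ord i'; have hj := ltn_ord j'.
- have e1 : (i'.+1 == (a + j')%N) = ((i' == a.-1 :> nat) && (j' == 0 :> nat)).
    by apply/idP/andP => [/eqP h | [/eqP h1 /eqP h2]]; [split; apply/eqP; lia | apply/eqP; lia].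
  have e2 : (i' == (a + j').+1 :> nat) = false by apply/eqP; lia.
  by rewrite e1 e2 subr0.
- have e1 : ((a + i')%N == j'.+1) = ((j' == a.-1 :> nat) && (i' == 0 :> nat)).
    by apply/idP/andP => [/eqP h | [/eqP h1 /eqP h2]]; [split; apply/eqP; lia | apply/eqP; lia].
  have e2 : ((a + i').+1 == j') = false by apply/eqP; lia.
  by rewrite e1 e2 sub0r.
- have e1 : ((a + i').+1 == (a + j')%N) = (i'.+1 == j') by apply/eqP/eqP; lia.
  have e2 : ((a + i')%N == (a + j').+1) = (i' == j'.+1 :> nat) by apply/eqP/eqP; lia.
  by rewrite e1 e2.
Qed.

Lemma symp_block n1 n2 (P : 'M[int]_n1) (Y : 'M[int]_(n1, n2)) (Q : 'M[int]_n2)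
   (J1 : 'M[int]_n1) (K : 'M[int]_(n1,n2)) (J2 : 'M[int]_n2) :
  P^T *m J1 *m P = J1 ->
  P^T *m (J1 *m Y + K *m Q) = K ->
  Y^T *m J1 *m P - Q^T *m K^T *m P = - K^T ->
  Y^T *m J1 *m Y - Q^T *m K^T *m Y + Y^T *m K *m Q + Q^T *m J2 *m Q = J2 ->
  (block_mx P Y 0 Q)^T *m block_mx J1 K (- K^T) J2 *m block_mx P Y 0 Q
   = block_mx J1 K (- K^T) J2.
Proof.
move=> h1 h2 h3 h4.
rewrite tr_block_mx trmx0 !mulmx_block.
rewrite !mul0mx !mulmx0 !addr0; congr block_mx.
- exact: h1.
- by rewrite -[RHS]h2 mulmxDr !mulmxA.
- by rewrite -[RHS]h3 mulmxDl mulmxN mulNmx ?mulmxA.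
- by rewrite -[RHS]h4 !mulmxDl mulmxN mulNmx ?mulmxA !addrA.
Qed.

Lemma char_poly_ublock n1 n2 (R : comNzRingType) (P : 'M[R]_n1) (Y : 'M[R]_(n1, n2)) (Q : 'M[R]_n2) :
  char_poly (block_mx P Y 0 Q) = char_poly P * char_poly Q.
Proof.
rewrite /char_poly /char_poly_mx map_block_mx map_mx0 scalar_mx_block.
by rewrite opp_block_mx add_block_mx oppr0 addr0 sub0r det_ublock.
Qed.

Lemma det2 (R : comNzRingType) (M : 'M[R]_2) :
  \det M = M 0 0 * M 1 1 - M 0 1 * M 1 0.
Proof.
rewrite (expand_det_row _ 0) !big_ord_recr big_ord0 /= add0r.
rewrite /cofactor !det_mx11 !mxE /=.
have e1 : widen_ord (leqnSn 1) (@ord_max 0) = 0 :> 'I_2 by apply: val_inj.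
have e2 : lift 0 (0:'I_1) = 1 :> 'I_2 by apply: val_inj.
have e3 : (@ord_max 1) = 1 :> 'I_2 by apply: val_inj.
have e4 : lift (1:'I_2) (0:'I_1) = 0 by apply: val_inj.
rewrite e1 e2 e3 e4 expr0 expr1 mul1r mulN1r mulrN.
by [].
Qed.

Definition Bf (t : int) (i j : nat) : int :=
 match i, j with
 | 0,0 => t | 0,1 => -1 | 0,3 => -1
 | 1,0 => 1 | 1,2 => -1
 | 2,2 => t | 2,3 => -1
 | 3,2 => 1
 | _,_ => 0 end.
Definition Bm t : 'M[int]_4 := \matrix_(i,j) Bf t i j.

Lemma Bsymp t : (Bm t)^T *m Jmat 4 *m Bm t = Jmat 4.
Proof.
apply/matrixP => i j.
case: i => [[|[|[|[|//]]]] Hi]; case: j => [[|[|[|[|//]]]] Hj];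
rewrite !(mxE, big_ord_recr, big_ord0) /=. all: lia.
Qed.

Definition xf (t : int) (i : nat) : int :=
  match i with 0 => 1 - t | 2 => 1 - t | 3 => -1 | _ => 0 end.
Definition Xm t m : 'M[int]_(4, m) := \matrix_(i,j) if j == 0 :> nat then xf t i else 0.

Lemma cond2 t m : (Bm t)^T *m (Jmat 4 *m Xm t m + Kc 4 m *m 1%:M) = Kc 4 m.
Proof.
rewrite mulmx1; apply/matrixP => i j.
case: j => [[|j] Hj]; case: i => [[|[|[|[|//]]]] Hi];
rewrite !(mxE, big_ord_recr, big_ord0) /=; lia.
Qed.

Lemma cond3 t m : (Xm t m)^T *m Jmat 4 *m Bm t - (1%:M)^T *m (Kc 4 m)^T *m Bm t = - (Kc 4 m)^T.
Proof.
rewrite trmx1 mul1mx; apply/matrixP => j i.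
case: j => [[|j] Hj]; case: i => [[|[|[|[|//]]]] Hi];
rewrite !(mxE, big_ord_recr, big_ord0) /=; lia.
Qed.

Lemma cond4 t m : (Xm t m)^T *m Jmat 4 *m Xm t m - (1%:M)^T *m (Kc 4 m)^T *m Xm t m
   + (Xm t m)^T *m Kc 4 m *m 1%:M + (1%:M)^T *m Jmat m *m 1%:M = Jmat m.
Proof.
rewrite trmx1 !mul1mx !mulmx1; apply/matrixP => i j.
case: j => [[|j] Hj]; case: i => [[|i] Hi];
rewrite !(mxE, big_ord_recr, big_ord0) /=; lia.
Qed.

Definition Ct t : 'M[int]_2 := \matrix_(i,j) Bf t i j.
Definition Yt t : 'M[int]_2 := \matrix_(i,j) Bf t i (2 + j).

Lemma Bblock t : Bm t = block_mx (Ct t) (Yt t) 0 (Ct t) :> 'M_(2+2).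
Proof.
apply/matrixP => i j.
case: (split_ordP i) => i' ->; case: (split_ordP j) => j' ->;
  rewrite ?block_mxEul ?block_mxEur ?block_mxEdl ?block_mxEdr !mxE /=;
  case: i' => [[|[|//]] Hi]; case: j' => [[|[|//]] Hj] //.
Qed.

Lemma cpCt (t : int) : char_poly (map_mx (intr : int -> algC) (Ct t)) = 'X^2 - (t%:~R)%:P * 'X + 1.
Proof.
rewrite /char_poly det2 !mxE /= mulr1n mulr0n !sub0r mulr0z mulrN1z mulr1z polyC0 subr0 polyCN polyC1; ring.
Qed.

Section Num.
Variable t : int.
Hypothesis ht : 3 <= t.
Let T : algC := t%:~R.
Let s : algC := sqrtC ((t ^+ 2 - 4)%:~R).
Definition lamt : algC := (t%:~R + sqrtC ((t ^+ 2 - 4)%:~R)) / 2.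
Definition mut : algC := (t%:~R - sqrtC ((t ^+ 2 - 4)%:~R)) / 2.

Lemma two_neq0 : (2 : algC) != 0. Proof. by rewrite pnatr_eq0. Qed.

Lemma s_ge0 : 0 <= sqrtC ((t ^+ 2 - 4)%:~R : algC).
Proof. rewrite sqrtC_ge0 ler0z; nia. Qed.

Lemma lam_mu_sum : lamt + mut = t%:~R.
Proof. rewrite /lamt /mut; by field. Qed.

Lemma lam_mu_prod : lamt * mut = 1.
Proof.
have h : sqrtC ((t ^+ 2 - 4)%:~R : algC) ^+ 2 = (t%:~R) ^+ 2 - 4.
  by rewrite sqrtCK rmorphB rmorphXn /=.
rewrite /lamt /mut.
have e : (t%:~R + sqrtC ((t ^+ 2 - 4)%:~R)) / 2 * ((t%:~R - sqrtC ((t ^+ 2 - 4)%:~R)) / 2)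
   = ((t%:~R) ^+ 2 - sqrtC ((t ^+ 2 - 4)%:~R : algC) ^+ 2) / 4 :> algC.
  by field.
by rewrite e h; field.
Qed.

Lemma lam_gt1 : 1 < lamt.
Proof.
rewrite /lamt ltr_pdivlMr ?ltr0n // mul1r.
apply: ltr_wpDr; first exact: s_ge0.
rewrite (_ : 2 = 2%:~R) // ltr_int; lia.
Qed.

Lemma lam_gt0 : 0 < lamt.
Proof. exact: lt_trans ltr01 lam_gt1. Qed.

Lemma mu_inv : mut = lamt^-1.
Proof.
have h := lam_mu_prod. apply: (mulfI (lt0r_neq0 lam_gt0)).
by rewrite h divff // lt0r_neq0 // lam_gt0.
Qed.

End Num.

Definition Am t m : 'M[int]_(4 + m) := block_mx (Bm t) (Xm t m) 0 1%:M.

Definition Pt (t : int) : {poly algC} := ('X - (lamt t)%:P) * ('X - (mut t)%:P).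

Lemma Pt_eq (t : int) : 3 <= t -> char_poly (map_mx (intr : int -> algC) (Ct t)) = Pt t.
Proof.
move=> ht; rewrite cpCt /Pt.
have -> : forall a b : algC, ('X - a%:P) * ('X - b%:P)
   = 'X^2 - (a + b)%:P * 'X + (a * b)%:P.
  by move=> a b; rewrite polyCD polyCM; ring.
by rewrite lam_mu_sum lam_mu_prod.
Qed.

Lemma cp_block_map n1 n2 (P : 'M[int]_n1) (Y : 'M[int]_(n1, n2)) (Q : 'M[int]_n2) :
  char_poly (map_mx (intr : int -> algC) (block_mx P Y 0 Q))
  = char_poly (map_mx intr P) * char_poly (map_mx intr Q).
Proof. by rewrite map_block_mx map_mx0 char_poly_ublock. Qed.

Lemma cp_one m : char_poly (map_mx (intr : int -> algC) (1%:M : 'M[int]_m)) = ('X - 1) ^+ m.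
Proof.
rewrite map_mx1 char_poly_trig ?scalar_mx_is_trig //.
under eq_bigr do rewrite mxE eqxx mulr1n.
by rewrite prodr_const card_ord.
Qed.

Lemma cpA (t : int) m : 3 <= t -> cpC (Am t m) = Pt t * Pt t * ('X - 1) ^+ m.
Proof.
move=> ht; rewrite /cpC /Am.
etransitivity; first exact: cp_block_map.
rewrite cp_one; congr (_ * _).
have := cp_block_map (Ct t) (Yt t) (Ct t).
by rewrite -Bblock Pt_eq // => <-.
Qed.

Definition thm_prop' n (A : 'M[int]_n) : Prop :=
  (A \in unitmx /\ A^T *m Jmat n *m A = Jmat n) /\
  (exists lam, leading_eigenvalue A lam /\ bi_perron lam) /\
  (forall z, eigenvalue_of A z -> ~ simple_eigenvalue A z).

Lemma rootPt t z : root (Pt t) z = (z == lamt t) || (z == mut t).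
Proof. by rewrite /Pt rootM !root_XsubC. Qed.

Lemma root_Xm1 m (z : algC) : root (('X - 1) ^+ m) z -> z = 1.
Proof.
case: m => [|m]; first by rewrite expr0 (negbTE (root1 z)).
by rewrite -polyC1 root_exp_XsubC => /eqP.
Qed.

Lemma Pt_neq0 t : Pt t != 0.
Proof. by rewrite /Pt mulf_neq0 // polyXsubC_eq0. Qed.

Lemma detB (t : int) : \det (Bm t) = 1.
Proof.
have := det_ublock (Ct t) (Yt t) (Ct t); rewrite -Bblock => ->.
rewrite det2 !mxE /=.
lia.
Qed.

Lemma root_cpA (t : int) m z : 3 <= t ->
  root (cpC (Am t m)) z = (z == lamt t) || (z == mut t) || root (('X - 1) ^+ m) z.
Proof. by move=> ht; rewrite cpA // !rootM !root_XsubC orbb. Qed.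

Lemma mainA (t : int) m : 3 <= t -> ~~ odd m -> thm_prop' (Am t m).
Proof.
move=> ht hm.
have l1 := lam_gt1 ht; have l0 := lam_gt0 ht.
have mu0 : 0 < mut t by rewrite (mu_inv ht) invr_gt0.
have mu1 : mut t < 1 by rewrite (mu_inv ht) invf_lt1.
have nl : `|lamt t| = lamt t by rewrite gtr0_norm.
have nm : `|mut t| = mut t by rewrite gtr0_norm.
split; [split|split].
- by rewrite unitmxE /Am det_ublock det1 mulr1 detB unitr1.
- rewrite /Am (@Jblock 4 m) //; apply: symp_block.
  + exact: Bsymp.
  + exact: cond2.
  + exact: cond3.
  + exact: cond4.
- exists (lamt t); split; [split|].
  + by rewrite /eigenvalue_of root_cpA // eqxx.
  + move=> z; rewrite /eigenvalue_of root_cpA // => /orP[/orP[]|] /=.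
    * by move=> /eqP -> /eqP.
    * by move=> /eqP -> _; rewrite nm nl; apply: lt_trans l1.
    * by move=> /root_Xm1 -> _; rewrite normr1 nl.
  + split; last split.
    * apply: (@root_monic_Aint (Pt t)).
      - by rewrite rootPt eqxx.
      - by rewrite -(Pt_eq ht) char_poly_monic.
      - rewrite -(Pt_eq ht) -map_char_poly; apply/polyOverP => i.
        by rewrite coef_map /= intr_int.
    * exact: l1.
    * move=> z; rewrite /galois_conjugate.
      have [p [hmin _] hdiv] := minCpolyP (lamt t).
      set q := map_poly (intr : int -> rat) (char_poly (Ct t)).
      have hq : map_poly ratr q = Pt t.
        rewrite -(Pt_eq ht) -map_char_poly /q -map_poly_comp.
        by apply: eq_map_poly => x /=; rewrite ratr_int.
      have hpq : (p %| q)%R by rewrite -hdiv hq rootPt eqxx.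
      rewrite hmin => hz.
      have : root (Pt t) z.
        by rewrite -hq; apply: root_dvdp hz; rewrite dvdp_map.
      have li : (lamt t)^-1 <= lamt t.
        by apply: le_trans (ltW l1); rewrite ltW // invf_lt1.
      rewrite rootPt => /orP[] /eqP ->.
      - by rewrite nl lexx li.
      - by rewrite nm (mu_inv ht) lexx li.
- move=> z hz [_ hmup].
  move: hmup; rewrite cpA // mupM ?mulf_neq0 ?Pt_neq0 ?expf_neq0 ?polyXsubC_eq0 //.
  rewrite mupM ?Pt_neq0 // -polyC1 mup_XsubCX => h.
  have := congr1 odd h; rewrite !oddD addbb /=.
  by case: eqP => _ //=; rewrite (negbTE hm).
Qed.

Lemma le_sum_seq (T : eqType) (f : T -> int) (s : seq T) x :
  x \in s -> `|f x| <= \sum_(y <- s) `|f y|.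
Proof.
elim: s => // y s IH; rewrite in_cons big_cons => /orP[/eqP-> | /IH h].
- by rewrite lerDl sumr_ge0.
- by rewrite ler_wpDl.
Qed.

Lemma main m : ~~ odd m ->
  forall s : seq 'M[int]_(4 + m), exists A : 'M[int]_(4 + m), thm_prop' A /\ A \notin s.
Proof.
move=> hm s.
pose f (M : 'M[int]_(4 + m)) := M (lshift m (0 : 'I_4)) (lshift m (0 : 'I_4)).
pose S := \sum_(M <- s) `|f M|.
have S0 : 0 <= S by rewrite sumr_ge0.
have ht : 3 <= 3 + S by rewrite lerDl.
exists (Am (3 + S) m); split; first exact: mainA.
apply/negP => hin.
have := le_sum_seq f hin.
rewrite /f /Am block_mxEul mxE /= -/S.
rewrite gtr0_norm; last by apply: lt_le_trans ht.
move=> h; have := lt_le_trans (ltr_pwDl (ltr0n _ 3) (lexx S)) h.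
by rewrite ltxx.
Qed.

Lemma main' n : (4 <= n)%N -> ~~ odd n ->
  forall s : seq 'M[int]_n, exists A : 'M[int]_n, thm_prop' A /\ A \notin s.
Proof.
move=> h4 hn.
have [m Em] : exists m, n = (4 + m)%N by exists (n - 4)%N; lia.
subst n; apply: main; by rewrite oddD in hn.
Qed.

Unset Implicit Arguments.
Set Strict Implicit.

Theorem theorem1p4 (g : nat) (hg : (2 <= g)%N) :
  forall s : seq 'M[int]_(2 * g), exists A : 'M[int]_(2 * g), thm_prop A /\ A \notin s.
Proof.
apply: (main' (n := (2 * g)%N)); first lia.
by rewrite oddM.
Qed.
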